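(* Let $0<q\leq 1$, let $A\in\mathbb{R}^{m\times n}$, let $D\in\mathbb{R}^{n\times d}$ be a frame with frame bounds $0<\mathcal{L}\leq\mathcal{U}<\infty$, fix positive integers $s<a$, and set $\rho=s/a$, $\kappa=\mathcal{U}/\mathcal{L}$. Assume that the $(D^{\dagger},q)$-RIP constants of $A$ satisfy $$\rho^{1-q/2}\left(\rho^{2/q-1}+1\right)^{q/2}\kappa^q(1+\delta_a)<1-\delta_{s+a}.$$ Let $f\in\mathbb{R}^n$ and $y=Af$. Then any solution $\hat{f}$ of $$\min_{\tilde{f}\in\mathbb{R}^n}\|D^*\tilde{f}\|_q\quad\text{subject to}\quad A\tilde{f}=y$$ satisfies $$\|\hat{f}-f\|_2\leq C_1\frac{\|D^*f-(D^*f)_{[s]}\|_q}{s^{1/q-1/2}},$$ where $C_1$ is a positive constant depending only on $\delta_a$, $\delta_{s+a}$, $\rho$, $q$, $\mathcal{L}$ and $\kappa$.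
   Context: $D\in\mathbb{R}^{n\times d}$ is a frame with frame bounds $0<\mathcal{L}\leq\mathcal{U}<\infty$ if $\mathcal{L}\|f\|_2^2\leq\|D^*f\|_2^2\leq\mathcal{U}\|f\|_2^2$ for all $f\in\mathbb{R}^n$. $D^{\dagger}=(DD^* )^{-1}D$. For a matrix $E\in\mathbb{R}^{n\times d}$, $A$ obeys the $(E,q)$-RIP of order $k$ with constant $\delta\in[0,1)$ if $(1-\delta)\|Ev\|_2^q\leq\|AEv\|_q^q\leq(1+\delta)\|Ev\|_2^q$ for all $v\in\mathbb{R}^d$ with at most $k$ nonzero entries; $\delta_k$ denotes the smallest such $\delta$. $x_{[s]}$ keeps the $s$ largest entries of $x$ in magnitude and zeros the rest. *)

(* Defs.v *)
From HB Require Import structures.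
From mathcomp Require Import all_boot all_order all_algebra.
From mathcomp Require Import all_classical all_reals all_analysis.
Set Implicit Arguments. Unset Strict Implicit. Unset Printing Implicit Defensive.
Import Order.TTheory GRing.Theory Num.Theory.
Local Open Scope ring_scope.

Section Defs.
Variable R : realType.

Definition l2norm (n : nat) (v : 'cV[R]_n) : R :=
  Num.sqrt (\sum_i (v i ord0) ^+ 2).

Definition lqnormq (q : R) (n : nat) (v : 'cV[R]_n) : R :=
  \sum_i (`|v i ord0| `^ q).

Definition lqnorm (q : R) (n : nat) (v : 'cV[R]_n) : R :=
  (lqnormq q v) `^ (1 / q).

Definition sparse (d k : nat) (v : 'cV[R]_d) : Prop :=
  leq #|[set i | v i ord0 != 0%R]| k.

Definition is_frame (n d : nat) (D : 'M[R]_(n, d)) (L U : R) : Prop :=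
  0 < L /\ L <= U /\
  forall f : 'cV[R]_n,
    L * (l2norm f) ^+ 2 <= (l2norm (D^T *m f)) ^+ 2 /\
    (l2norm (D^T *m f)) ^+ 2 <= U * (l2norm f) ^+ 2.

Definition dagger (n d : nat) (D : 'M[R]_(n, d)) : 'M[R]_(n, d) :=
  invmx (D *m D^T) *m D.

Definition RIP (m n d : nat) (A : 'M[R]_(m, n)) (E : 'M[R]_(n, d))
  (q : R) (k : nat) (delta : R) : Prop :=
  0 <= delta < 1 /\
  forall v : 'cV[R]_d, sparse k v ->
    (1 - delta) * (l2norm (E *m v)) `^ q <= lqnormq q (A *m (E *m v)) /\
    lqnormq q (A *m (E *m v)) <= (1 + delta) * (l2norm (E *m v)) `^ q.

Definition RIP_const (m n d : nat) (A : 'M[R]_(m, n)) (E : 'M[R]_(n, d))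
  (q : R) (k : nat) (delta : R) : Prop :=
  RIP A E q k delta /\ forall delta', RIP A E q k delta' -> delta <= delta'.

Definition best_s_term (d s : nat) (x xs : 'cV[R]_d) : Prop :=
  exists S : {set 'I_d},
    #|S| = minn s d /\
    (forall i j, i \in S -> j \notin S -> `|x j ord0| <= `|x i ord0|) /\
    xs = \col_i (if i \in S then x i ord0 else 0).

End Defs.

(* Main.v *)
Require Import Defs.
From HB Require Import structures.
From mathcomp Require Import all_boot all_order all_algebra.
From mathcomp Require Import all_classical all_reals all_analysis.
From mathcomp Require Import ring lra zify.
Import Order.TTheory GRing.Theory Num.Theory.
Set Implicit Arguments. Unset Strict Implicit. Unset Printing Implicit Defensive.
Local Open Scope ring_scope.

Section Aux.
Variable R : realType.
Implicit Types (x y r u : R).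

Lemma pw_le x y r : 0 <= x -> x <= y -> 0 <= r -> x `^ r <= y `^ r.
Proof.
move=> x0 xy r0; apply: ge0_ler_powR => //; rewrite nnegrE //; exact: le_trans xy.
Qed.

Lemma pw_le_inv x y r : 0 <= x -> 0 <= y -> 0 < r -> x `^ r <= y `^ r -> x <= y.
Proof.
move=> x0 y0 r0 h; rewrite leNgt; apply/negP => yx.
have := @gt0_ltr_powR R r r0 y x y0 x0 yx; by rewrite ltNge h.
Qed.

Lemma pwK x r : 0 <= x -> r != 0 -> (x `^ r) `^ r^-1 = x.
Proof. by move=> x0 r0; rewrite -powRrM mulfV // powRr1. Qed.

Lemma pw_subadd x y q : 0 <= x -> 0 <= y -> 0 < q -> q <= 1 ->
  (x + y) `^ q <= x `^ q + y `^ q.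
Proof.
move=> x0 y0 q0 q1.
have [->|xy0] := eqVneq (x + y) 0.
  by rewrite powR0 ?gt_eqF //; apply: addr_ge0; exact: powR_ge0.
have t0 : 0 < x + y by rewrite lt_def xy0 addr_ge0.
have key : forall u, 0 <= u -> u <= x + y -> u / (x+y) <= (u / (x+y)) `^ q.
  move=> u u0 ux; have [->|un0] := eqVneq u 0; first by rewrite mul0r powR_ge0.
  apply: ger1_powR => //; apply/andP; split.
    by apply: divr_gt0 => //; rewrite lt_def un0 u0.
  by rewrite ler_pdivrMr // mul1r.
have e : forall u, 0 <= u -> u `^ q = (x+y) `^ q * (u / (x+y)) `^ q.
  move=> u u0; rewrite -powRM ?(ltW t0) ?divr_ge0 ?(ltW t0) //.
  by rewrite mulrC divfK.
rewrite (e x x0) (e y y0) -mulrDr -{1}(mulr1 ((x+y) `^ q)).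
apply: ler_wpM2l; first exact: powR_ge0.
apply: le_trans (lerD (key x x0 _) (key y y0 _)).
- by rewrite -mulrDl divff.
- by rewrite lerDl.
- by rewrite lerDr.
Qed.

Lemma bernoulli_pw u p : 0 <= u -> 0 < p -> p < 1 -> u `^ p <= 1 - p + p * u.
Proof.
move=> u0 p0 p1.
have pi : 0 < p^-1 by rewrite invr_gt0.
have qi : 0 < (1 - p)^-1 by rewrite invr_gt0 subr_gt0.
have h := @conjugate_powR R (u `^ p) 1 p^-1 (1 - p)^-1 (powR_ge0 _ _) ler01
  pi qi.
rewrite mulr1 pwK ?gt_eqF // powR1 !invrK in h.
have e : p + (1 - p) = 1 by rewrite addrC subrK.
by move: (h e); rewrite mul1r addrC mulrC.
Qed.


Lemma pw_inv_nat x p : 0 < x -> x `^ (1 - p) = x / x `^ p.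
Proof.
move=> x0; rewrite powRB; first by rewrite powRr1 // ltW.
by apply/implyP => _; rewrite gt_eqF.
Qed.

Lemma jensen_sum (I : finType) (T : {set I}) (w : I -> R) p :
  (forall i, 0 <= w i) -> 0 < p -> p < 1 ->
  \sum_(i in T) w i `^ p <= (#|T|%:R) `^ (1 - p) * (\sum_(i in T) w i) `^ p.
Proof.
move=> w0 p0 p1.
set Sw := \sum_(i in T) w i.
have Sw0 : 0 <= Sw by apply: sumr_ge0.
have [SwE|SwN0] := eqVneq Sw 0.
  have z := psumr_eq0P (fun i _ => w0 i) SwE.
  rewrite big1; last by move=> i iT; rewrite z // powR0 // gt_eqF.
  by apply: mulr_ge0; apply: powR_ge0.
have nT : (0 < #|T|)%N.
  rewrite card_gt0; apply/negP => /eqP T0; move: SwN0; rewrite /Sw T0 big_set0.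
  by rewrite eqxx.
set n := (#|T|%:R : R).
have n0 : 0 < n by rewrite ltr0n.
set m := Sw / n.
have m0 : 0 < m by rewrite divr_gt0 // lt_def SwN0 Sw0.
have step : forall i, w i `^ p <= m `^ p * (1 - p + p * (w i / m)).
  move=> i; rewrite -{1}(divfK (lt0r_neq0 m0) (w i)) mulrC powRM ?(ltW m0) //;
    last by rewrite divr_ge0 // ltW.
  apply: ler_wpM2l; first exact: powR_ge0.
  by apply: bernoulli_pw => //; rewrite divr_ge0 // ltW.
apply: le_trans (ler_sum _ (fun i _ => step i)) _.
rewrite -mulr_sumr big_split /= sumr_const -mulr_sumr.
have -> : \sum_(i in T) w i / m = n.
  by rewrite -mulr_suml /m -/Sw invf_div mulrCA divff // mulr1.
have -> : (1 - p) *+ #|T| + p * n = n.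
  by rewrite -mulr_natr -/n mulrBl mul1r subrK.
rewrite /m powRM //; last by rewrite invr_ge0 ltW.
have -> : n^-1 `^ p = (n `^ p)^-1.
  by rewrite -powR_inv1 ?ltW // -powRrM mulN1r powRN.
by rewrite pw_inv_nat // le_eqVlt; apply/orP; left; apply/eqP; ring.
Qed.

Definition Qd (P tau : R) := P * tau * Num.sqrt (1 + tau ^+ 2).
Definition nud (P tau : R) := Num.sqrt ((1 + Qd P tau) / 2).
Definition thd (P tau q : R) := 1 - nud P tau `^ q.
Definition cfin (P tau q : R) := (2 + 4 * P) * (thd P tau q)^-1 `^ q^-1.

Lemma thd_gt0 P tau q : 0 <= P -> 0 <= tau -> 0 < q -> Qd P tau < 1 ->
  0 < thd P tau q.
Proof.
move=> P0 t0 q0 Q1.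
have Q0 : 0 <= Qd P tau by rewrite /Qd !mulr_ge0 ?sqrtr_ge0.
have n0 : 0 <= nud P tau by rewrite sqrtr_ge0.
have n1 : nud P tau < 1.
  rewrite /nud -[X in _ < X]sqrtr1 ltr_sqrt ?ltr01 //; lra.
rewrite /thd subr_gt0.
have := @gt0_ltr_powR R q q0 (nud P tau) 1 n0 ler01 n1.
by rewrite powR1.
Qed.

Lemma cfin_gt0 P tau q : 0 <= P -> 0 <= tau -> 0 < q -> Qd P tau < 1 ->
  0 < cfin P tau q.
Proof.
move=> P0 t0 q0 Q1; rewrite /cfin mulr_gt0 //; first by lra.
by apply: powR_gt0; rewrite invr_gt0 thd_gt0.
Qed.

Lemma final_real X M G N P tau q :
  0 <= X -> 0 <= M -> 0 <= G -> 0 <= N -> 0 <= P -> 0 <= tau -> 0 < q ->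
  Qd P tau < 1 ->
  N ^+ 2 <= X ^+ 2 + M ^+ 2 -> X ^+ 2 <= P * M * N ->
  M `^ q <= (tau * X) `^ q + G `^ q ->
  N <= cfin P tau q * G.
Proof.
move=> X0 M0 G0 N0 P0 t0 q0 Q1 hN hX hM.
have Q0 : 0 <= Qd P tau by rewrite /Qd !mulr_ge0 ?sqrtr_ge0.
have th0 := @thd_gt0 P tau q P0 t0 q0 Q1.
have c0 := @cfin_gt0 P tau q P0 t0 q0 Q1.
set th := thd P tau q in th0.
have [hG|hG] := leP (G `^ q) (th * M `^ q).
  set nu := nud P tau.
  have nu0 : 0 <= nu by rewrite sqrtr_ge0.
  have nu2 : nu ^+ 2 = (1 + Qd P tau) / 2 by rewrite sqr_sqrtr //; lra.
  have hnM : nu * M <= tau * X.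
    apply: (@pw_le_inv _ _ q) => //; try by rewrite mulr_ge0.
    rewrite powRM //.
    have : (1 - th) * M `^ q <= (tau * X) `^ q.
      by rewrite mulrBl mul1r; lra.
    by rewrite /th /thd opprB addrC subrK.
  have Qsq : Qd P tau ^+ 2 = P ^+ 2 * tau ^+ 2 * (1 + tau ^+ 2).
    by rewrite /Qd !exprMn sqr_sqrtr //; apply: addr_ge0 => //; apply: sqr_ge0.
  have nu1 : nu ^+ 2 <= 1 by lra.
  have X00 : X = 0.
    apply/eqP; rewrite eq_le X0 andbT; rewrite leNgt; apply/negP => Xp.
    have h1 : nu ^+ 2 * M ^+ 2 <= tau ^+ 2 * X ^+ 2.
      by rewrite -!exprMn; apply: lerXn2r => //; rewrite ?nnegrE ?mulr_ge0.
    have h2 : nu ^+ 2 * N ^+ 2 <= (1 + tau ^+ 2) * X ^+ 2 by nra.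
    have h3 : X ^+ 4 <= P ^+ 2 * M ^+ 2 * N ^+ 2.
      have -> : X ^+ 4 = (X ^+ 2) ^+ 2 by rewrite -exprM.
      rewrite -!exprMn; apply: lerXn2r; rewrite ?nnegrE ?mulr_ge0 ?sqr_ge0 //.
    have h4 : nu ^+ 2 * nu ^+ 2 * X ^+ 4 <= Qd P tau ^+ 2 * X ^+ 4.
      rewrite Qsq.
      have e1 : nu ^+ 2 * nu ^+ 2 * X ^+ 4 <= P ^+ 2 * (nu ^+ 2 * M ^+ 2) * (nu ^+ 2 * N ^+ 2).
        have pp : 0 <= nu ^+ 2 * nu ^+ 2 by rewrite mulr_ge0 ?sqr_ge0.
        have := ler_wpM2l pp h3; congr (_ <= _); ring.
      apply: (le_trans e1).
      have p2 : 0 <= P ^+ 2 by apply: sqr_ge0.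
      have a1 : 0 <= nu ^+ 2 * M ^+ 2 by rewrite mulr_ge0 ?sqr_ge0.
      have a2 : 0 <= nu ^+ 2 * N ^+ 2 by rewrite mulr_ge0 ?sqr_ge0.
      have := ler_pM (mulr_ge0 p2 a1) a2 (ler_wpM2l p2 h1) h2.
      by congr (_ <= _); ring.
    have X4 : 0 < X ^+ 4 by rewrite exprn_gt0.
    have : nu ^+ 2 * nu ^+ 2 <= Qd P tau ^+ 2 by rewrite -(ler_pM2r X4).
    rewrite nu2; nra.
  have M00 : M = 0.
    move: hnM; rewrite X00 mulr0 => hnM.
    have nup : 0 < nu.
      rewrite /nu /nud sqrtr_gt0; lra.
    apply/eqP; rewrite eq_le M0 andbT; nra.
  have N00 : N = 0.
    move: hN; rewrite X00 M00 expr0n /= addr0 => hN; nra.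
  by rewrite N00 mulr_ge0 // ltW.
have hM2 : M <= th^-1 `^ q^-1 * G.
  apply: (@pw_le_inv _ _ q) => //; first by rewrite mulr_ge0 ?powR_ge0.
  rewrite powRM ?powR_ge0 // -powRrM mulVf ?gt_eqF // powRr1; last first.
    by rewrite invr_ge0 ltW.
  rewrite ler_pdivlMl //; lra.
have NM : N <= (2 + 4 * P) * M.
  have [XM|XM] := leP X M.
    have : N ^+ 2 <= (2 * M) ^+ 2 by nra.
    move=> h; have : N <= 2 * M.
      by rewrite -(@ler_pXn2r _ 2) // ?nnegrE ?mulr_ge0.
    nra.
  have : N ^+ 2 <= (2 * X) ^+ 2 by nra.
  move=> h; have NX : N <= 2 * X by rewrite -(@ler_pXn2r _ 2) // ?nnegrE ?mulr_ge0.
  have : X ^+ 2 <= 2 * P * M * X.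
    have := ler_wpM2l (mulr_ge0 P0 M0) NX.
    have -> : P * M * (2 * X) = 2 * P * M * X by ring.
    by apply: le_trans.
  move=> h2; have : X <= 2 * P * M.
    have Xp : 0 < X by lra.
    by rewrite -(ler_pM2r Xp); nra.
  nra.
apply: (le_trans NM); rewrite /cfin -mulrA; apply: ler_wpM2l => //; lra.
Qed.

End Aux.

Section Vec.
Variable R : realType.

Definition restr d (T : {set 'I_d}) (x : 'cV[R]_d) : 'cV[R]_d :=
  \col_i (if i \in T then x i ord0 else 0).

Definition dot n (u v : 'cV[R]_n) : R := \sum_i u i ord0 * v i ord0.

Lemma l2norm_ge0 n (v : 'cV[R]_n) : 0 <= l2norm v.
Proof. exact: sqrtr_ge0. Qed.

Lemma l2norm_sq n (v : 'cV[R]_n) : l2norm v ^+ 2 = dot v v.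
Proof.
rewrite /l2norm sqr_sqrtr; last by apply: sumr_ge0 => i _; apply: sqr_ge0.
by apply: eq_bigr => i _; rewrite expr2.
Qed.

Lemma dot_ge0 n (v : 'cV[R]_n) : 0 <= dot v v.
Proof. by apply: sumr_ge0 => i _; rewrite -expr2 sqr_ge0. Qed.

Lemma dotC n (u v : 'cV[R]_n) : dot u v = dot v u.
Proof. by apply: eq_bigr => i _; rewrite mulrC. Qed.

Lemma l2norm_eq0 n (v : 'cV[R]_n) : l2norm v = 0 -> v = 0.
Proof.
move=> h; have : dot v v = 0 by rewrite -l2norm_sq h expr0n.
move=> /psumr_eq0P z; apply/matrixP => i j; rewrite ord1 mxE.
have z' : forall k : 'I_n, true -> 0 <= v k ord0 * v k ord0.
  by move=> k _; rewrite -expr2 sqr_ge0.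
have := z z' i isT.
by move/eqP; rewrite -expr2 sqrf_eq0 => /eqP.
Qed.

Lemma cauchy_schwarz n (u v : 'cV[R]_n) : dot u v <= l2norm u * l2norm v.
Proof.
set a := l2norm u; set b := l2norm v.
have [a0|a0] := eqVneq a 0.
  by rewrite (l2norm_eq0 a0) /dot big1 ?mulr_ge0 ?l2norm_ge0 // => i _; rewrite mxE mul0r.
have [b0|b0] := eqVneq b 0.
  by rewrite (l2norm_eq0 b0) /dot big1 ?mulr_ge0 ?l2norm_ge0 // => i _; rewrite mxE mulr0.
have ap : 0 < a by rewrite lt_def a0 l2norm_ge0.
have bp : 0 < b by rewrite lt_def b0 l2norm_ge0.
have key : 2 * a * b * dot u v <= b ^+ 2 * dot u u + a ^+ 2 * dot v v.
  rewrite /dot !mulr_sumr -big_split /=; apply: ler_sum => i _.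
  have := sqr_ge0 (b * u i ord0 - a * v i ord0); nra.
rewrite -!l2norm_sq -/a -/b in key.
have abp : 0 < 2 * a * b by rewrite !mulr_gt0.
rewrite -(ler_pM2l abp); nra.
Qed.

Lemma dot_tr n d (M : 'M[R]_(n, d)) (u : 'cV[R]_n) (w : 'cV[R]_d) :
  dot (M^T *m u) w = dot u (M *m w).
Proof.
rewrite /dot; under eq_bigr => j _ do rewrite mxE mulr_suml.
rewrite exchange_big /=; apply: eq_bigr => i _; rewrite mxE mulr_sumr.
by apply: eq_bigr => j _; rewrite mxE; ring.
Qed.

Lemma l2norm_triangle n (u v : 'cV[R]_n) : l2norm (u + v) <= l2norm u + l2norm v.
Proof.
rewrite -(@ler_pXn2r _ 2) // ?nnegrE ?addr_ge0 ?l2norm_ge0 //.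
have e : l2norm (u + v) ^+ 2 = l2norm u ^+ 2 + 2 * dot u v + l2norm v ^+ 2.
  rewrite !l2norm_sq /dot mulr_sumr -!big_split /=; apply: eq_bigr => i _.
  by rewrite !mxE; ring.
rewrite e; have := cauchy_schwarz u v; nra.
Qed.

Lemma l2norm_opp n (v : 'cV[R]_n) : l2norm (- v) = l2norm v.
Proof. by rewrite /l2norm; congr Num.sqrt; apply: eq_bigr => i _; rewrite mxE sqrrN. Qed.

Lemma restr_sum d (T : {set 'I_d}) x : restr T x + restr (~: T) x = x.
Proof.
by apply/matrixP => i j; rewrite ord1 !mxE inE; case: (i \in T) => /=; rewrite ?addr0 ?add0r.
Qed.

Lemma restrU d (T T' : {set 'I_d}) x : [disjoint T & T'] ->
  restr (T :|: T') x = restr T x + restr T' x.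
Proof.
move=> dj; apply/matrixP => i j; rewrite !mxE inE.
case iT: (i \in T); case iT': (i \in T') => /=; rewrite ?addr0 ?add0r //.
by move: dj => /disjoint_setI0 /setP /(_ i); rewrite !inE iT iT'.
Qed.

Lemma sum_restr d (T : {set 'I_d}) (x : 'cV[R]_d) (g : R -> R) : g 0 = 0 ->
  \sum_i g (restr T x i ord0) = \sum_(i in T) g (x i ord0).
Proof.
move=> g0; rewrite [RHS]big_mkcond /=; apply: eq_bigr => i _; rewrite mxE.
by case: (i \in T).
Qed.

Lemma lqnormq_restr q d (T : {set 'I_d}) (x : 'cV[R]_d) : q != 0 ->
  lqnormq q (restr T x) = \sum_(i in T) `|x i ord0| `^ q.
Proof. by move=> q0; rewrite /lqnormq (@sum_restr d T x (fun t => `|t| `^ q)) // normr0 powR0. Qed.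

Lemma l2sq_restr d (T : {set 'I_d}) (x : 'cV[R]_d) :
  l2norm (restr T x) ^+ 2 = \sum_(i in T) x i ord0 ^+ 2.
Proof.
rewrite /l2norm sqr_sqrtr; last by apply: sumr_ge0 => i _; apply: sqr_ge0.
by rewrite (@sum_restr d T x (fun t => t ^+ 2)) // expr0n.
Qed.

Lemma sparse_restr d k (T : {set 'I_d}) (x : 'cV[R]_d) : (#|T| <= k)%N ->
  sparse k (restr T x).
Proof.
move=> Tk; rewrite /sparse; apply: leq_trans Tk; apply: subset_leq_card.
by apply/fintype.subsetP => i; rewrite inE mxE; case: (i \in T); rewrite ?eqxx.
Qed.

Lemma lqnormq_ge0 q n (v : 'cV[R]_n) : 0 <= lqnormq q v.
Proof. by apply: sumr_ge0 => i _; apply: powR_ge0. Qed.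

Lemma lqnormq_opp q n (v : 'cV[R]_n) : lqnormq q (- v) = lqnormq q v.
Proof. by apply: eq_bigr => i _; rewrite mxE normrN. Qed.

Lemma lqnormq_add q n (u v : 'cV[R]_n) : 0 < q -> q <= 1 ->
  lqnormq q (u + v) <= lqnormq q u + lqnormq q v.
Proof.
move=> q0 q1; rewrite /lqnormq -big_split /=; apply: ler_sum => i _; rewrite mxE.
apply: le_trans (pw_subadd (normr_ge0 _) (normr_ge0 _) q0 q1).
by apply: pw_le; [exact: normr_ge0 | exact: ler_normD | exact: ltW].
Qed.

End Vec.

Section Comb.
Variable R : realType.

Lemma exists_max d (B : {set 'I_d}) (g : 'I_d -> R) : B != finset.set0 ->
  exists2 j, j \in B & forall k, k \in B -> g k <= g j.
Proof.
case/set0Pn => i0 iB.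
case: (@arg_maxP _ _ _ i0 (mem B) g iB) => j jB jmax.
by exists j => // k kB; apply: jmax.
Qed.

Lemma topk d (x : 'cV[R]_d) (Rem : {set 'I_d}) k : (k <= #|Rem|)%N ->
  exists T : {set 'I_d}, [/\ T \subset Rem, #|T| = k &
    forall i j, i \in T -> j \in Rem :\: T -> `|x j ord0| <= `|x i ord0|].
Proof.
elim: k => [_|k IH kR].
  exists finset.set0; split; rewrite ?finset.sub0set ?cards0 // => i j; by rewrite finset.in_set0.
have [T [TR Tk Tmax]] := IH (ltnW kR).
have ne : Rem :\: T != finset.set0.
  apply/negP => /eqP e.
  have : #|Rem :\: T| = 0%N by rewrite e cards0.
  rewrite cardsD (finset.setIidPr TR) Tk => /eqP; rewrite subn_eq0 => h.
  by move: (leq_trans kR h); rewrite ltnn.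
have [j jD jmax] := exists_max (fun i => `|x i ord0|) ne.
have jT : j \notin T by move: jD; rewrite inE => /andP[].
exists (j |: T); split.
- rewrite finset.subUset TR andbT finset.sub1set; by move: jD; rewrite inE => /andP[].
- by rewrite cardsU1 jT Tk.
- move=> i l; rewrite !inE => /orP[/eqP ->|iT] /andP[].
    rewrite negb_or => /andP[_ lT] lR; apply: jmax; by rewrite inE lT lR.
  rewrite negb_or => /andP[_ lT] lR; apply: Tmax => //; by rewrite inE lT lR.
Qed.

Lemma dom_sum d (x : 'cV[R]_d) (T : {set 'I_d}) (a : nat) j q : 0 <= q ->
  #|T| = a -> (forall i, i \in T -> `|x j ord0| <= `|x i ord0|) ->
  a%:R * `|x j ord0| `^ q <= \sum_(i in T) `|x i ord0| `^ q.
Proof.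
move=> q0 Ta h.
have : \sum_(i in T) `|x j ord0| `^ q <= \sum_(i in T) `|x i ord0| `^ q.
  by apply: ler_sum => i iT; apply: pw_le; [exact: normr_ge0 | exact: h | exact: q0].
by rewrite sumr_const Ta mulr_natl.
Qed.

Lemma l2norm_restr0 d (x : 'cV[R]_d) : l2norm (restr finset.set0 x) = 0.
Proof.
have := l2sq_restr finset.set0 x; rewrite big_set0 => /eqP; rewrite sqrf_eq0 => /eqP //.
Qed.

Lemma smallblock d (x : 'cV[R]_d) (T : {set 'I_d}) (a : nat) q V :
  (0 < a)%N -> 0 < q -> 0 <= V -> (#|T| <= a)%N ->
  (forall i, i \in T -> a%:R * `|x i ord0| `^ q <= V) ->
  l2norm (restr T x) `^ q <= a%:R `^ (q / 2 - 1) * V.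
Proof.
move=> a0 q0 V0 Ta hV.
have ap : (0 : R) < a%:R by rewrite ltr0n.
set b := (V / a%:R) `^ q^-1.
have b0 : 0 <= b by apply: powR_ge0.
have bq : b `^ q = V / a%:R.
  by rewrite /b -powRrM mulVf ?gt_eqF // powRr1 // divr_ge0 // ltW.
have xb : forall i, i \in T -> x i ord0 ^+ 2 <= b ^+ 2.
  move=> i iT; rewrite -real_normK ?num_real //; apply: lerXn2r;
    rewrite ?nnegrE ?normr_ge0 //.
  apply: (@pw_le_inv _ _ _ q) => //.
  by rewrite bq ler_pdivlMr // mulrC hV.
have l2 : l2norm (restr T x) ^+ 2 <= (Num.sqrt a%:R * b) ^+ 2.
  rewrite l2sq_restr exprMn sqr_sqrtr ?ler0n //.
  apply: le_trans (ler_sum _ xb) _.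
  rewrite sumr_const -[b ^+ 2 *+ _]mulr_natl.
  by apply: ler_wpM2r; [exact: sqr_ge0 | rewrite ler_nat].
have l1 : l2norm (restr T x) <= Num.sqrt a%:R * b.
  by rewrite -(@ler_pXn2r _ 2) // ?nnegrE ?mulr_ge0 ?sqrtr_ge0 ?l2norm_ge0.
apply: le_trans (pw_le (l2norm_ge0 _) l1 (ltW q0)) _.
rewrite powRM ?sqrtr_ge0 // bq -powR12_sqrt ?ler0n // -powRrM.
rewrite powRB; last by apply/implyP => _; rewrite gt_eqF.
rewrite powRr1 ?ler0n // (mulrC 2^-1 q).
by rewrite le_eqVlt; apply/orP; left; apply/eqP; ring.
Qed.

End Comb.

Section Block.
Variable R : realType.

Lemma restr_splitD d (T Rem : {set 'I_d}) (x : 'cV[R]_d) : T \subset Rem ->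
  restr Rem x = restr T x + restr (Rem :\: T) x.
Proof.
move=> TR; rewrite -restrU.
  congr restr; apply/setP => i; rewrite !inE.
  case iT: (i \in T) => //=; by rewrite (fintype.subsetP TR).
by rewrite -finset.setI_eq0 finset.setIDA finset.setIC -finset.setIDA finset.setDv finset.setI0.
Qed.

Lemma block d (x : 'cV[R]_d) (F : 'cV[R]_d -> R) (K q : R) (a : nat) :
  (0 < a)%N -> 0 < q -> 0 <= K ->
  (forall u v, F (u + v) <= F u + F v) ->
  (forall T : {set 'I_d}, (#|T| <= a)%N -> F (restr T x) <= K * l2norm (restr T x) `^ q) ->
  forall (Rem : {set 'I_d}) V, 0 <= V ->
  (forall i, i \in Rem -> a%:R * `|x i ord0| `^ q <= V) ->
  F (restr Rem x) <= K * a%:R `^ (q / 2 - 1) * (V + \sum_(i in Rem) `|x i ord0| `^ q).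
Proof.
move=> a0 q0 K0 Fadd FT Rem.
have [N] := ubnP #|Rem|; elim: N Rem => // N IH Rem RemN V V0 hV.
have c0 : 0 <= K * a%:R `^ (q / 2 - 1) by rewrite mulr_ge0 ?powR_ge0.
have S0 : 0 <= \sum_(i in Rem) `|x i ord0| `^ q by apply: sumr_ge0 => i _; exact: powR_ge0.
have [->|RemN0] := eqVneq Rem finset.set0.
  apply: le_trans (FT _ _) _; first by rewrite cards0.
  rewrite l2norm_restr0 powR0 ?gt_eqF // mulr0.
  by rewrite mulr_ge0 // addr_ge0 // big_set0.
have [T [TR Tk Tmax]] := topk x (geq_minr a #|Rem|).
have T0 : (0 < #|T|)%N.
  by rewrite Tk leq_min a0 card_gt0.
rewrite (restr_splitD x TR).
apply: le_trans (Fadd _ _) _.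
have h1 : F (restr T x) <= K * a%:R `^ (q / 2 - 1) * V.
  apply: le_trans (FT _ _) _; first by rewrite Tk geq_minl.
  rewrite -mulrA; apply: ler_wpM2l => //.
  apply: smallblock => //; first by rewrite Tk geq_minl.
  by move=> i iT; apply: hV; apply: (fintype.subsetP TR).
set V' := \sum_(i in T) `|x i ord0| `^ q.
have V'0 : 0 <= V' by apply: sumr_ge0 => i _; exact: powR_ge0.
have h2 : F (restr (Rem :\: T) x) <=
    K * a%:R `^ (q / 2 - 1) * (V' + \sum_(i in Rem :\: T) `|x i ord0| `^ q).
  apply: IH => //.
    rewrite cardsD (finset.setIidPr TR).
    have h : (#|Rem| - #|T| < #|Rem|)%N by rewrite ltn_subrL T0 card_gt0 RemN0.
    by apply: leq_trans h _; rewrite -ltnS.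
  move=> j jD.
  have Ta : #|T| = a.
    case: (leqP a #|Rem|) => h.
      by rewrite Tk; apply/minn_idPl.
    exfalso.
    have : #|Rem :\: T| = 0%N.
      rewrite cardsD (finset.setIidPr TR) Tk.
      have -> : minn a #|Rem| = #|Rem| by apply/minn_idPr; exact: ltnW.
      by rewrite subnn.
    by move/eqP; rewrite cards_eq0 => /eqP e; move: jD; rewrite e finset.in_set0.
  apply: dom_sum => //; first exact: ltW.
  by move=> i iT; apply: Tmax.
apply: le_trans (lerD h1 h2) _.
rewrite -mulrDr; apply: ler_wpM2l => //.
by rewrite [X in _ <= _ + X](big_setID T) /= (finset.setIidPr TR).
Qed.

End Block.

Section Frame.
Variable R : realType.
Variables (n d : nat) (D : 'M[R]_(n, d)) (L U : R).
Hypothesis fr : is_frame D L U.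

Lemma dot0r m (w : 'cV[R]_m) : dot w 0 = 0.
Proof. by rewrite /dot big1 // => i _; rewrite mxE mulr0. Qed.

Lemma frame_sq (w : 'cV[R]_n) :
  l2norm (D^T *m w) ^+ 2 = dot w (D *m (D^T *m w)).
Proof. by rewrite l2norm_sq dot_tr. Qed.

Lemma frame_unit : (D *m D^T) \in unitmx.
Proof.
case: fr => L0 [LU hf].
rewrite unitmxE unitfE; apply/negP => /det0P [v vn0 vA].
set w := v^T.
have hw : D *m (D^T *m w) = 0.
  by rewrite mulmxA /w -[D *m D^T]trmxK trmx_mul trmxK -trmx_mul vA trmx0.
have := (hf w).1; rewrite frame_sq hw dot0r => h.
have h2 : l2norm w ^+ 2 <= 0 by nra.
have w0 : l2norm w = 0.
  by apply/eqP; rewrite -sqrf_eq0 eq_le h2 sqr_ge0.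
by move: vn0; rewrite -[v]trmxK -/w (l2norm_eq0 w0) trmx0 eqxx.
Qed.

Lemma dagger_left (h : 'cV[R]_n) : dagger D *m (D^T *m h) = h.
Proof.
by rewrite /dagger mulmxA -(mulmxA (invmx _)) mulVmx ?frame_unit // mul1mx.
Qed.

Lemma DDt_dagger : D *m D^T *m dagger D = D.
Proof. by rewrite /dagger mulmxA mulmxV ?frame_unit // mul1mx. Qed.

Lemma frame_upper (w : 'cV[R]_n) : l2norm (D^T *m w) <= Num.sqrt U * l2norm w.
Proof.
case: fr => L0 [LU hf].
have U0 : 0 <= U by apply: le_trans LU; exact: ltW.
rewrite -(@ler_pXn2r _ 2) // ?nnegrE ?mulr_ge0 ?sqrtr_ge0 ?l2norm_ge0 //.
by rewrite exprMn (sqr_sqrtr U0); exact: (hf w).2.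
Qed.

Lemma frame_lower (w : 'cV[R]_n) : Num.sqrt L * l2norm w <= l2norm (D^T *m w).
Proof.
case: fr => L0 [LU hf].
rewrite -(@ler_pXn2r _ 2) // ?nnegrE ?mulr_ge0 ?sqrtr_ge0 ?l2norm_ge0 //.
by rewrite exprMn (sqr_sqrtr (ltW L0)); exact: (hf w).1.
Qed.

Lemma dagger_bound (v : 'cV[R]_d) :
  Num.sqrt L * l2norm (dagger D *m v) <= l2norm v.
Proof.
set w := dagger D *m v.
apply: le_trans (frame_lower w) _.
have e : l2norm (D^T *m w) ^+ 2 = dot (D^T *m w) v.
  by rewrite frame_sq dot_tr /w !mulmxA mulmxV ?frame_unit // mul1mx.
have cs := cauchy_schwarz (D^T *m w) v.
rewrite -e in cs.
have p0 := l2norm_ge0 (D^T *m w); have p1 := l2norm_ge0 v.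
nra.
Qed.

End Frame.

Section Misc.
Variable R : realType.

Lemma pw_tri (u v q : R) : 0 < q -> q <= 1 -> `|u + v| `^ q <= `|u| `^ q + `|v| `^ q.
Proof.
move=> q0 q1; apply: le_trans (pw_subadd (normr_ge0 _) (normr_ge0 _) q0 q1).
by apply: pw_le; [exact: normr_ge0 | exact: ler_normD | exact: ltW].
Qed.

Lemma sum_split d (S : {set 'I_d}) (g : 'I_d -> R) :
  \sum_i g i = \sum_(i in S) g i + \sum_(i in ~: S) g i.
Proof.
rewrite (bigID (mem S)) /=; congr (_ + _); apply: eq_bigl => i; by rewrite !inE.
Qed.

Lemma cone_lemma d (z x : 'cV[R]_d) (S : {set 'I_d}) q : 0 < q -> q <= 1 ->
  lqnormq q (z + x) <= lqnormq q z ->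
  \sum_(i in ~: S) `|x i ord0| `^ q <=
    \sum_(i in S) `|x i ord0| `^ q + 2 * \sum_(i in ~: S) `|z i ord0| `^ q.
Proof.
move=> q0 q1; rewrite /lqnormq (sum_split S) (sum_split S (fun i => `|z i ord0| `^ q)).
have h1 : \sum_(i in S) `|z i ord0| `^ q <=
    \sum_(i in S) `|(z + x) i ord0| `^ q + \sum_(i in S) `|x i ord0| `^ q.
  rewrite -big_split /=; apply: ler_sum => i _; rewrite mxE.
  have -> : z i ord0 = (z i ord0 + x i ord0) + - x i ord0 by ring.
  by apply: le_trans (pw_tri _ _ q0 q1) _; rewrite normrN addrK.
have h2 : \sum_(i in ~: S) `|x i ord0| `^ q <=
    \sum_(i in ~: S) `|(z + x) i ord0| `^ q + \sum_(i in ~: S) `|z i ord0| `^ q.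
  rewrite -big_split /=; apply: ler_sum => i _; rewrite mxE.
  have e : z i ord0 + x i ord0 + - z i ord0 = x i ord0 by ring.
  by have := pw_tri (z i ord0 + x i ord0) (- z i ord0) q0 q1; rewrite e normrN.
move=> h; lra.
Qed.

Lemma dot_restr d (T : {set 'I_d}) (x : 'cV[R]_d) :
  dot (restr T x) x = \sum_(i in T) x i ord0 ^+ 2.
Proof.
rewrite /dot [RHS]big_mkcond /=; apply: eq_bigr => i _; rewrite mxE.
by case: (i \in T); rewrite ?mul0r // expr2.
Qed.

Lemma topk_full d (T Rem : {set 'I_d}) (a : nat) j : T \subset Rem ->
  #|T| = minn a #|Rem| -> j \in Rem :\: T -> #|T| = a.
Proof.
move=> TR Tk jD.
case: (leqP a #|Rem|) => h; first by rewrite Tk; apply/minn_idPl.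
exfalso.
have : #|Rem :\: T| = 0%N.
  rewrite cardsD (finset.setIidPr TR) Tk.
  have -> : minn a #|Rem| = #|Rem| by apply/minn_idPr; exact: ltnW.
  by rewrite subnn.
by move/eqP; rewrite cards_eq0 => /eqP e; move: jD; rewrite e finset.in_set0.
Qed.

End Misc.

Section Conv.
Variable R : realType.

Definition Pdef (da dsa q kappa : R) := Num.sqrt kappa * ((1 + da) / (1 - dsa)) `^ q^-1.
Definition taudef (rho q : R) := rho `^ (q^-1 - 2^-1).

Lemma sqrt_pw (y q : R) : 0 <= y -> Num.sqrt y `^ q = y `^ (q / 2).
Proof. by move=> y0; rewrite -powR12_sqrt // -powRrM mulrC. Qed.

Lemma pwKq (y q : R) : 0 <= y -> 0 < q -> (y `^ q^-1) `^ q = y.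
Proof. by move=> y0 q0; rewrite -powRrM mulVf ?gt_eqF // powRr1. Qed.

Lemma Q_lt1 (q rho kappa da dsa : R) : 0 < q -> q <= 1 -> 0 < rho -> 1 <= kappa ->
  0 <= da -> 0 < 1 - dsa ->
  rho `^ (1 - q / 2) * (rho `^ (2 / q - 1) + 1) `^ (q / 2) * kappa `^ q * (1 + da)
    < 1 - dsa ->
  Qd (Pdef da dsa q kappa) (taudef rho q) < 1.
Proof.
move=> q0 q1 r0 k1 da0 ds1 H.
set c := (1 + da) / (1 - dsa).
have c0 : 0 <= c by rewrite divr_ge0 // ?ltW //; lra.
set tau := taudef rho q.
have t0 : 0 <= tau by apply: powR_ge0.
have k0 : 0 <= kappa by lra.
have Q0 : 0 <= Qd (Pdef da dsa q kappa) tau.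
  by rewrite /Qd /Pdef !mulr_ge0 ?sqrtr_ge0 ?powR_ge0.
have y0 : 0 <= 1 + tau ^+ 2 by rewrite addr_ge0 ?sqr_ge0.
have eQ : Qd (Pdef da dsa q kappa) tau `^ q =
    kappa `^ (q / 2) * c * rho `^ (1 - q / 2) * (rho `^ (2 / q - 1) + 1) `^ (q / 2).
  rewrite /Qd /Pdef -/c.
  rewrite powRM ?mulr_ge0 ?sqrtr_ge0 ?powR_ge0 // powRM ?mulr_ge0 ?sqrtr_ge0 ?powR_ge0 //.
  rewrite powRM ?sqrtr_ge0 ?powR_ge0 //.
  rewrite sqrt_pw // pwKq // sqrt_pw //.
  have -> : tau `^ q = rho `^ (1 - q / 2).
    by rewrite /tau /taudef -powRrM; congr (_ `^ _); field; rewrite gt_eqF.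
  have -> : tau ^+ 2 = rho `^ (2 / q - 1).
    rewrite -powR_mulrn // /tau /taudef -powRrM; congr (_ `^ _).
    by field; rewrite gt_eqF.
  by rewrite [1 + rho `^ _]addrC.
have kq : kappa `^ (q / 2) <= kappa `^ q.
  by apply: ler_powR => //; lra.
have Qq : Qd (Pdef da dsa q kappa) tau `^ q < 1.
  rewrite eQ.
  have B0 : 0 <= rho `^ (1 - q / 2) * (rho `^ (2 / q - 1) + 1) `^ (q / 2).
    by rewrite mulr_ge0 ?powR_ge0.
  have H' : rho `^ (1 - q / 2) * (rho `^ (2 / q - 1) + 1) `^ (q / 2) * kappa `^ q * c < 1.
    by rewrite /c mulrA ltr_pdivrMr // mul1r.
  apply: le_lt_trans H'.
  have -> : kappa `^ (q / 2) * c * rho `^ (1 - q / 2) * (rho `^ (2 / q - 1) + 1) `^ (q / 2)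
    = rho `^ (1 - q / 2) * (rho `^ (2 / q - 1) + 1) `^ (q / 2) * kappa `^ (q / 2) * c by ring.
  apply: ler_wpM2r => //; apply: ler_wpM2l => //.
rewrite ltNge; apply/negP => h1.
have := pw_le ler01 h1 (ltW q0); rewrite powR1 => h2.
by move: Qq; rewrite ltNge h2.
Qed.

End Conv.

Section Conv2.
Variable R : realType.

Lemma rho_form (a s q : R) : 0 < a -> 0 < s ->
  a `^ (q / 2 - 1) * s `^ (1 - q / 2) = (s / a) `^ (1 - q / 2).
Proof.
move=> a0 s0; rewrite powRM ?ltW ?invr_gt0 //.
rewrite -(powR_inv1 (ltW a0)) -powRrM mulrC; congr (_ * _ `^ _); ring.
Qed.

Lemma G_form (a s rho Eq q : R) : 0 < q -> 0 < s -> 0 < rho -> a = s / rho -> 0 <= Eq ->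
  (2 * a `^ (q / 2 - 1) * Eq) `^ q^-1 =
  2 `^ q^-1 * rho^-1 `^ (2^-1 - q^-1) * Eq `^ q^-1 / s `^ (q^-1 - 2^-1).
Proof.
move=> q0 s0 r0 ae E0.
have a0 : 0 < a by rewrite ae divr_gt0.
rewrite powRM ?mulr_ge0 ?powR_ge0 // powRM ?powR_ge0 //.
rewrite -powRrM.
have -> : (q / 2 - 1) * q^-1 = 2^-1 - q^-1 by field; rewrite gt_eqF.
rewrite ae powRM; last 2 first.
  exact: ltW.
  by rewrite invr_ge0 ltW.
have -> : s `^ (2^-1 - q^-1) = (s `^ (q^-1 - 2^-1))^-1 by rewrite -powRN opprB.
ring.
Qed.

End Conv2.

Unset Implicit Arguments.

Definition C1def (R : realType) (da dsa rho q L kappa : R) : R :=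
  cfin (Pdef da dsa q kappa) (taudef rho q) q * 2 `^ q^-1 * rho^-1 `^ (2^-1 - q^-1)
    / Num.sqrt L.

Theorem corollary2p2 (R : realType) :
  exists C1 : R -> R -> R -> R -> R -> R -> R,
  forall (q : R) (m n d : nat) (A : 'M[R]_(m, n)) (D : 'M[R]_(n, d))
         (L U : R) (s a : nat) (da dsa : R),
    0 < q -> q <= 1 ->
    is_frame D L U ->
    (0 < s)%N -> (s < a)%N ->
    RIP_const A (dagger D) q a da ->
    RIP_const A (dagger D) q (s + a) dsa ->
    let rho := s%:R / a%:R in
    let kappa := U / L in
    rho `^ (1 - q / 2) * (rho `^ (2 / q - 1) + 1) `^ (q / 2)
      * kappa `^ q * (1 + da) < 1 - dsa ->
    0 < C1 da dsa rho q L kappa /\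
    forall (f fhat : 'cV[R]_n),
      A *m fhat = A *m f ->
      (forall g : 'cV[R]_n, A *m g = A *m f ->
         lqnorm q (D^T *m fhat) <= lqnorm q (D^T *m g)) ->
      forall xs : 'cV[R]_d, best_s_term s (D^T *m f) xs ->
      l2norm (fhat - f) <=
        C1 da dsa rho q L kappa * lqnorm q (D^T *m f - xs)
          / (s%:R `^ (1 / q - 1 / 2)).
Proof.
exists (@C1def R).
move=> q m n d A D L U s a da dsa q0 q1 fr s0 sa hRa hRsa rho kappa H.
have q2pos : 0 < q / 2 by lra.
have q2lt1 : q / 2 < 1 by lra.
have q2le : 0 <= 1 - q / 2 by lra.
have two0 : (0 : R) <= 2 by lra.
have [L0 [LU hf]] := fr.
have U0 : 0 < U by apply: lt_le_trans LU.
have a0 : (0 < a)%N by apply: leq_trans sa.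
have ar : (0 : R) < a%:R by rewrite ltr0n.
have sr : (0 : R) < s%:R by rewrite ltr0n.
have rho0 : 0 < rho by rewrite divr_gt0.
have kappa1 : 1 <= kappa by rewrite /kappa ler_pdivlMr // mul1r.
have da0 : 0 <= da by case: hRa => [[/andP[]]].
have dsa1 : 0 < 1 - dsa.
  apply: (le_lt_trans _ H); rewrite !mulr_ge0 ?powR_ge0 //; lra.
have Q1 := Q_lt1 q0 q1 rho0 kappa1 da0 dsa1 H.
set P := Pdef da dsa q kappa.
set tau := taudef rho q.
have P0 : 0 <= P by rewrite /P /Pdef mulr_ge0 ?sqrtr_ge0 ?powR_ge0.
have tau0 : 0 <= tau by apply: powR_ge0.
have cf0 := @cfin_gt0 R P tau q P0 tau0 q0 Q1.
split.
  rewrite /C1def -/P -/tau; apply: divr_gt0; last by rewrite sqrtr_gt0.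
  apply: mulr_gt0; [apply: mulr_gt0 => //; apply: powR_gt0; lra|].
  by apply: powR_gt0; rewrite invr_gt0.
move=> f fhat hA hmin xs [S [cS [Smax ->]]].
have da1 : 0 <= 1 + da by lra.
set h := fhat - f.
set z := D^T *m f.
set x := D^T *m h.
set E := dagger D.
have Ah : A *m h = 0 by rewrite /h mulmxBr hA subrr.
have hx : E *m x = h by rewrite /E /x (dagger_left fr).
have zx : D^T *m fhat = z + x by rewrite /x /h mulmxBr addrC subrK.
have hcone : lqnormq q (z + x) <= lqnormq q z.
  have := hmin f erefl; rewrite /lqnorm zx -/z => h1.
  apply: (@pw_le_inv _ _ _ (1 / q)) h1; try exact: lqnormq_ge0.
  by rewrite divr_gt0.
have Cn := cone_lemma S q0 q1 hcone.
have exs : z - \col_i (if i \in S then z i ord0 else 0) = restr (~: S) z.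
  by rewrite -{1}(restr_sum S z) addrC addKr.
rewrite -/z exs.
set Eq := \sum_(i in ~: S) `|z i ord0| `^ q.
have Eq0 : 0 <= Eq by apply: sumr_ge0 => i _; apply: powR_ge0.
have lqE : lqnorm q (restr (~: S) z) = Eq `^ q^-1.
  by rewrite /lqnorm lqnormq_restr ?gt_eqF // div1r.
rewrite lqE.
have [T1 [T1S T1k T1max]] := topk x (geq_minr a #|~: S|).
set Rr := ~: S :\: T1.
set T01 := S :|: T1.
have T01c : ~: T01 = Rr by apply/setP => i; rewrite !inE negb_or andbC.
have xsplit : x = restr T01 x + restr Rr x by rewrite -T01c restr_sum.
have T01card : (#|T01| <= s + a)%N.
  apply: leq_trans (leq_card_setU S T1) _; apply: leq_add.
    by rewrite cS geq_minl.
  by rewrite T1k geq_minl.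
set V1 := \sum_(i in T1) `|x i ord0| `^ q.
have V10 : 0 <= V1 by apply: sumr_ge0 => i _; apply: powR_ge0.
have hV : forall i, i \in Rr -> a%:R * `|x i ord0| `^ q <= V1.
  move=> i iR; apply: dom_sum; first exact: ltW.
    exact: (topk_full T1S T1k iR).
  by move=> j jT; apply: T1max.
set Zs := \sum_(i in ~: S) `|x i ord0| `^ q.
have eZ : V1 + \sum_(i in Rr) `|x i ord0| `^ q = Zs.
  by rewrite /Zs [in RHS](big_setID T1) /= (finset.setIidPr T1S).
pose K1 := (1 + da) * (Num.sqrt L)^-1 `^ q.
have K10 : 0 <= K1 by rewrite mulr_ge0 ?powR_ge0.
have Ebound : forall v : 'cV[R]_d, l2norm (E *m v) <= (Num.sqrt L)^-1 * l2norm v.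
  move=> v; rewrite ler_pdivlMl; first exact: (dagger_bound fr v).
  by rewrite sqrtr_gt0.
have F1add : forall u v : 'cV[R]_d,
    lqnormq q (A *m (E *m (u + v))) <=
    lqnormq q (A *m (E *m u)) + lqnormq q (A *m (E *m v)).
  by move=> u v; rewrite !mulmxDr; apply: lqnormq_add.
have F1T : forall T : {set 'I_d}, (#|T| <= a)%N ->
    lqnormq q (A *m (E *m restr T x)) <= K1 * l2norm (restr T x) `^ q.
  move=> T Ta.
  have [[_ hr] _] := hRa.
  have [_ up] := hr (restr T x) (sparse_restr x Ta).
  apply: (le_trans up).
  rewrite /K1 -mulrA.
  apply: ler_wpM2l; first exact: da1.
  have sL : 0 <= (Num.sqrt L)^-1 by rewrite invr_ge0 sqrtr_ge0.
  rewrite -(powRM _ sL (l2norm_ge0 (restr T x))).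
  apply: pw_le; [exact: l2norm_ge0 | exact: Ebound | exact: ltW].
have B1 := @block R d x (fun v => lqnormq q (A *m (E *m v))) K1 q a a0 q0 K10
  F1add F1T Rr V1 V10 hV.
rewrite /= eZ in B1.
have F2add : forall u v : 'cV[R]_d,
    l2norm (u + v) `^ q <= l2norm u `^ q + l2norm v `^ q.
  move=> u v; apply: le_trans (pw_subadd (l2norm_ge0 _) (l2norm_ge0 _) q0 q1).
  apply: pw_le; [exact: l2norm_ge0 | exact: l2norm_triangle | exact: ltW].
have F2T : forall T : {set 'I_d}, (#|T| <= a)%N ->
    l2norm (restr T x) `^ q <= 1 * l2norm (restr T x) `^ q.
  by move=> T _; rewrite mul1r.
have B2 := @block R d x (fun v => l2norm v `^ q) 1 q a a0 q0 ler01
  F2add F2T Rr V1 V10 hV.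
rewrite /= eZ mul1r in B2.
set X := l2norm (restr T01 x).
set W := l2norm (restr Rr x).
set Nn := l2norm x.
set Y := l2norm (E *m restr T01 x).
have X0 : 0 <= X by apply: l2norm_ge0.
have Y0 : 0 <= Y by apply: l2norm_ge0.
have N0 : 0 <= Nn by apply: l2norm_ge0.
have hlow : (1 - dsa) * Y `^ q <= K1 * a%:R `^ (q / 2 - 1) * Zs.
  have [[_ hr] _] := hRsa; have [lo _] := hr _ (sparse_restr x T01card).
  apply: (le_trans lo).
  have e0 : A *m (E *m restr T01 x) + A *m (E *m restr Rr x) = 0.
    by rewrite -mulmxDr -mulmxDr -xsplit hx Ah.
  have e1 : A *m (E *m restr T01 x) = - (A *m (E *m restr Rr x)).
    by apply/eqP; rewrite -addr_eq0 e0.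
  by rewrite e1 lqnormq_opp.
pose c := (1 + da) / (1 - dsa).
have Zs0 : 0 <= Zs by apply: sumr_ge0 => i _; apply: powR_ge0.
pose Mq := a%:R `^ (q / 2 - 1) * Zs.
have Mq0 : 0 <= Mq by apply: mulr_ge0; [apply: powR_ge0 | exact: Zs0].
pose M := Mq `^ q^-1.
have M0 : 0 <= M by apply: powR_ge0.
have MqE : M `^ q = Mq by apply: pwKq.
have WM : W <= M.
  apply: (@pw_le_inv _ _ _ q); [exact: l2norm_ge0 | exact: M0 | exact: q0 |].
  by rewrite MqE; exact: B2.
have sL0 : 0 <= (Num.sqrt L)^-1 by rewrite invr_ge0 sqrtr_ge0.
have c0 : 0 <= c by apply: divr_ge0; [exact: da1 | exact: ltW].
have cq0 : 0 <= c `^ q^-1 by apply: powR_ge0.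
have YM : Y <= c `^ q^-1 * (Num.sqrt L)^-1 * M.
  apply: (@pw_le_inv _ _ _ q); [exact: Y0 | | exact: q0 |].
    by apply: mulr_ge0; [apply: mulr_ge0|].
  have e : (c `^ q^-1 * (Num.sqrt L)^-1 * M) `^ q = c * (Num.sqrt L)^-1 `^ q * Mq.
    rewrite (powRM _ (mulr_ge0 cq0 sL0) M0) (powRM _ cq0 sL0).
    by rewrite (pwKq c0 q0) MqE.
  rewrite e -(ler_pM2l dsa1).
  apply: (le_trans hlow).
  have c1 : (1 - dsa) * c = 1 + da by rewrite /c mulrC (divfK (lt0r_neq0 dsa1)).
  have -> : (1 - dsa) * (c * (Num.sqrt L)^-1 `^ q * Mq) =
            ((1 - dsa) * c) * (Num.sqrt L)^-1 `^ q * Mq by ring.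
  rewrite c1 /K1 /Mq.
  by rewrite le_eqVlt; apply/orP; left; apply/eqP; ring.
have hX2 : X ^+ 2 <= Num.sqrt U * Y * Nn.
  have e1 : X ^+ 2 = dot (restr T01 x) x by rewrite /X l2sq_restr dot_restr.
  have key : forall v : 'cV[R]_d, dot (D^T *m h) v = dot (D^T *m h) (D^T *m (E *m v)).
    move=> v; rewrite dot_tr [in RHS]dot_tr !mulmxA.
    by rewrite (mulmxV (frame_unit fr)) mul1mx.
  rewrite e1 dotC key.
  apply: (le_trans (cauchy_schwarz _ _)).
  rewrite -/x -/Nn mulrC; apply: ler_wpM2r; first exact: N0.
  exact: (frame_upper fr).
have eP : P = Num.sqrt U * (Num.sqrt L)^-1 * c `^ q^-1.
  by rewrite /P /Pdef /kappa (sqrtrM _ (ltW U0)) (sqrtrV (ltW L0)).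
have hXP : X ^+ 2 <= P * M * Nn.
  apply: (le_trans hX2).
  have sU0 : 0 <= Num.sqrt U by apply: sqrtr_ge0.
  apply: (le_trans (_ : _ <= Num.sqrt U * (c `^ q^-1 * (Num.sqrt L)^-1 * M) * Nn)).
    apply: ler_wpM2r; first exact: N0.
    by apply: ler_wpM2l.
  rewrite eP; rewrite le_eqVlt; apply/orP; left; apply/eqP; ring.
have eN : Nn ^+ 2 = X ^+ 2 + W ^+ 2.
  rewrite /X /W !l2sq_restr -T01c.
  rewrite /Nn /l2norm sqr_sqrtr; last by apply: sumr_ge0 => i _; apply: sqr_ge0.
  exact: sum_split.
have hN : Nn ^+ 2 <= X ^+ 2 + M ^+ 2.
  rewrite eN lerD2l; apply: lerXn2r; [exact: l2norm_ge0 | exact: M0 | exact: WM].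
have sqpw : forall y : R, (y ^+ 2) `^ (q / 2) = `|y| `^ q.
  move=> y; rewrite -(real_normK (num_real y)) -(powR_mulrn 2 (normr_ge0 y)) -powRrM.
  by congr (_ `^ _); field.
have hSx : \sum_(i in S) `|x i ord0| `^ q <= s%:R `^ (1 - q / 2) * X `^ q.
  have j := @jensen_sum R _ S (fun i => x i ord0 ^+ 2) (q / 2)
    (fun i => sqr_ge0 _) q2pos q2lt1.
  under eq_bigr => i _ do rewrite -sqpw.
  apply: (le_trans j).
  apply: ler_pM; [exact: powR_ge0 | exact: powR_ge0 | |].
    apply: pw_le; [exact: ler0n | by rewrite cS ler_nat geq_minl | exact: q2le].
  have -> : X `^ q = (X ^+ 2) `^ (q / 2) by rewrite sqpw (ger0_norm X0).
  apply: pw_le; [by apply: sumr_ge0 => i _; apply: sqr_ge0 | | exact: ltW].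
  rewrite /X l2sq_restr [in X in _ <= X](big_setID S) /=.
  rewrite (finset.setIidPr (finset.subsetUl S T1)) lerDl.
  by apply: sumr_ge0 => i _; apply: sqr_ge0.
pose G := (2 * a%:R `^ (q / 2 - 1) * Eq) `^ q^-1.
have G0 : 0 <= G by apply: powR_ge0.
have aE0 : 0 <= a%:R `^ (q / 2 - 1) by apply: powR_ge0.
have GqE : G `^ q = 2 * a%:R `^ (q / 2 - 1) * Eq.
  apply: pwKq; last exact: q0.
  apply: mulr_ge0; last exact: Eq0.
  by apply: mulr_ge0; [exact: two0 | exact: aE0].
have tqE : (tau * X) `^ q = (s%:R / a%:R) `^ (1 - q / 2) * X `^ q.
  rewrite (powRM _ tau0 X0) /tau /taudef -powRrM.
  by congr (_ `^ _ * _); field; rewrite gt_eqF.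
have hM : M `^ q <= (tau * X) `^ q + G `^ q.
  clearbody M G.
  rewrite MqE GqE tqE -(@rho_form R a%:R s%:R q ar sr) /Mq.
  have h1 : Zs <= s%:R `^ (1 - q / 2) * X `^ q + 2 * Eq.
    apply: (le_trans Cn); rewrite lerD2r; exact: hSx.
  have := ler_wpM2l aE0 h1.
  move=> h2; apply: (le_trans h2).
  by rewrite le_eqVlt; apply/orP; left; apply/eqP; ring.
have fin := final_real X0 M0 G0 N0 P0 tau0 q0 Q1 hN hXP hM.
have hh : l2norm h <= cfin P tau q * G / Num.sqrt L.
  rewrite ler_pdivlMr; last by rewrite sqrtr_gt0.
  rewrite mulrC; apply: le_trans fin.
  exact: (frame_lower fr h).
apply: (le_trans hh).
have aE : a%:R = s%:R / rho.
  by rewrite /rho invf_div mulrC (divfK (lt0r_neq0 sr)).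
rewrite /G (G_form q0 sr rho0 aE Eq0) /C1def /P /tau !div1r.
by rewrite le_eqVlt; apply/orP; left; apply/eqP; ring.
Qed.
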